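(* Let $n\ge1$, $k=\lfloor\log_2 n\rfloor$ and $r=n-2^k$. Let $A\in\mathbb{R}^{n\times n}$ be the unit-row tree matrix of size $n$ (defined in the context). Then $$\beta(A)=\Big(2\sqrt{k+1}-\sqrt{k+2}\Big)+\frac{n}{2^{k}}\Big(\sqrt{k+2}-\sqrt{k+1}\Big).$$ In particular, when $n=2^k$, $\beta(A)=\sqrt{k+1}$.
   Context: For $A\in\mathbb{R}^{m\times n}$, $\beta(A)=\frac{1}{2^n}\sum_{x\in\{-1,1\}^n}\|Ax\|_\infty$. Tree matrix: with $k=\lfloor\log_2 n\rfloor$ and $r=n-2^k$, list the $2^k$ sign strings $s\in\{-1,1\}^k$ in lexicographic order (with $-1<+1$). Replace each of the first $r$ strings $s$ by its two extensions $(s,-1)$ and $(s,+1)$ (keeping the order), and keep the remaining $2^k-r$ strings unchanged; this gives $n$ strings, $2r$ of length $k+1$ and $2^k-r$ of length $k$ (they are the root-to-leaf paths of a binary tree with $n$ leaves filled from the left, with left edges labeled $-1$ and right edges $+1$). For each such string $t$, form the row vector in $\mathbb{R}^n$ given by $(1,t,0,\dots,0)$ (a leading $1$, then $t$, then zeros to length $n$), and divide it by its Euclidean norm (i.e. by $\sqrt{k+2}$ or $\sqrt{k+1}$). The $n\times n$ matrix with these rows is the unit-row tree matrix. *)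

(* Defs.v *)
(* the reals are an arbitrary real-closed field R (rcfType),
   which includes the real numbers. *)
From HB Require Import structures.
From mathcomp Require Import all_boot all_order all_algebra.
Set Implicit Arguments. Unset Strict Implicit. Unset Printing Implicit Defensive.
Import Order.TTheory GRing.Theory Num.Theory.
Local Open Scope ring_scope.

Definition sgnb {R : pzRingType} (b : bool) : R := if b then 1 else -1.

Definition infnorm {R : realDomainType} m (y : 'cV[R]_m) : R :=
  \big[Num.max/0]_(i < m) `|y i 0|.

Definition signvec {R : pzRingType} n (s : {ffun 'I_n -> bool}) : 'cV[R]_n :=
  \col_j sgnb (s j).

Definition beta {R : realFieldType} m n (A : 'M[R]_(m, n)) : R :=
  (2 ^+ n)^-1 * \sum_(s : {ffun 'I_n -> bool}) infnorm (A *m @signvec R n s).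

Fixpoint lex_strings (k : nat) : seq (seq bool) :=
  if k is k'.+1 then
    [seq false :: t | t <- lex_strings k'] ++ [seq true :: t | t <- lex_strings k']
  else [:: [::]].

Definition tree_strings (n : nat) : seq (seq bool) :=
  let k := trunc_log 2 n in
  let r := (n - 2 ^ k)%N in
  flatten [seq [:: rcons t false; rcons t true] | t <- take r (lex_strings k)]
  ++ drop r (lex_strings k).

(* row (1, t, 0, ..., 0) (as a sequence, implicitly zero-padded) divided by its
   Euclidean norm sqrt(|t| + 1) *)
Definition tree_row {R : rcfType} (t : seq bool) : seq R :=
  [seq x / Num.sqrt (size t).+1%:R | x <- (1 :: [seq sgnb b | b <- t])].

Definition tree_matrix (R : rcfType) (n : nat) : 'M[R]_n :=
  \matrix_(i < n, j < n) nth 0 (tree_row (nth [::] (tree_strings n) i)) j.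

(* Main.v *)
Require Import Defs.
From HB Require Import structures.
From mathcomp Require Import all_boot all_order all_algebra.
From mathcomp Require Import lra zify.
Import Order.TTheory GRing.Theory Num.Theory.
Set Implicit Arguments. Unset Strict Implicit. Unset Printing Implicit Defensive.

Lemma lex_size k : size (lex_strings k) = 2 ^ k.
Proof. elim: k => [//|k IH] /=; rewrite size_cat !size_map IH expnS; lia. Qed.

Lemma lex_all k t : t \in lex_strings k -> size t = k.
Proof.
elim: k t => [|k IH] t /=; first by rewrite inE => /eqP->.
by rewrite mem_cat => /orP[] /mapP[u /IH <- ->].
Qed.

Lemma lex_mem k t : size t = k -> t \in lex_strings k.
Proof.
elim: k t => [|k IH] [|b t] //= [Ht]; rewrite mem_cat.
by case: b; apply/orP; [right|left]; apply/mapP; exists t => //; apply: IH.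
Qed.

Lemma lex_uniq k : uniq (lex_strings k).
Proof.
elim: k => [//|k IH] /=; rewrite cat_uniq !map_inj_uniq // ?IH /=; last 2 first.
- by move=> a b [].
- by move=> a b [].
rewrite andbT; apply/hasPn => u /mapP[v _ ->]; by apply/mapP => -[w _].
Qed.


Lemma tk_bounds n : (1 <= n)%N -> (2 ^ trunc_log 2 n <= n < 2 ^ (trunc_log 2 n).+1)%N.
Proof. by move=> H; rewrite trunc_logP // trunc_log_ltn. Qed.

Lemma r_le n : (1 <= n)%N -> (n - 2 ^ trunc_log 2 n <= 2 ^ trunc_log 2 n)%N.
Proof. move=> /tk_bounds; rewrite expnS; lia. Qed.

Lemma tree_size n : (1 <= n)%N -> size (tree_strings n) = n.
Proof.
move=> H; have := r_le H; have := tk_bounds H.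
rewrite /tree_strings size_cat size_drop lex_size size_flatten /shape -map_comp.
set k := trunc_log 2 n; set r := (n - 2 ^ k)%N => Hb Hr.
rewrite (eq_map (g := fun=> 2%N)) //.
have -> : forall (s : seq (seq bool)), sumn [seq 2%N | _ <- s] = (2 * size s)%N.
  by elim=> [|a s IH] //=; rewrite IH; lia.
rewrite size_takel ?lex_size //.
lia.
Qed.

Lemma tree_mem_short n t : t \in drop (n - 2 ^ trunc_log 2 n) (lex_strings (trunc_log 2 n)) ->
  t \in tree_strings n.
Proof. by move=> H; rewrite /tree_strings mem_cat H orbT. Qed.

Lemma tree_mem_long n t b : t \in take (n - 2 ^ trunc_log 2 n) (lex_strings (trunc_log 2 n)) ->
  rcons t b \in tree_strings n.
Proof.
move=> H; rewrite /tree_strings mem_cat; apply/orP; left.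
by apply/flatten_mapP; exists t => //; case: b; rewrite !inE eqxx ?orbT.
Qed.

Lemma tree_inv n u : u \in tree_strings n ->
  u \in drop (n - 2 ^ trunc_log 2 n) (lex_strings (trunc_log 2 n)) \/
  exists t b, u = rcons t b /\ t \in take (n - 2 ^ trunc_log 2 n) (lex_strings (trunc_log 2 n)).
Proof.
rewrite /tree_strings mem_cat => /orP[|]; last by left.
move/flatten_mapP => [t Ht]; rewrite !inE => /orP[]/eqP->; right; [exists t, false|exists t, true]; by [].
Qed.

Lemma take_drop_disj k r t : t \in take r (lex_strings k) -> t \notin drop r (lex_strings k).
Proof.
move=> Ht; have := lex_uniq k; rewrite -{1}(cat_take_drop r (lex_strings k)) cat_uniq => /and3P[_ H _].
by apply/negP => Hd; move/hasPn: H => /(_ t Hd); rewrite Ht.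
Qed.

Lemma tree_size_le n u : (1 <= n)%N -> u \in tree_strings n -> (size u < n)%N.
Proof.
move=> Hn Hu; have := tk_bounds Hn; have := ltn_expl (trunc_log 2 n) (isT : (1 < 2)%N).
case: (tree_inv Hu) => [/mem_drop/lex_all ->|[t [b [-> Ht]]]]; first lia.
have Hr : (0 < n - 2 ^ trunc_log 2 n)%N.
  by case: (n - _)%N Ht => //; rewrite take0.
rewrite size_rcons (lex_all (mem_take Ht)) ; lia.
Qed.

Local Open Scope ring_scope.

Definition xb n (s : {ffun 'I_n -> bool}) (j : nat) : bool := nth false [seq s i | i <- enum 'I_n] j.

Lemma xbE n (s : {ffun 'I_n -> bool}) (i : 'I_n) : xb s i = s i.
Proof.
rewrite /xb (nth_map i) ?size_enum_ord //; congr (s _).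
by apply: val_inj; rewrite /= nth_enum_ord.
Qed.

Definition Ssum (R : rcfType) (t : seq bool) (f : nat -> bool) : R :=
  \sum_(l < size t) sgnb (nth false t l == f l).

Lemma sgnb_mul (R : rcfType) a t y :
  sgnb t * sgnb y = sgnb a * sgnb (t == (a == y)) :> R.
Proof.
by case: a; case: t; case: y; rewrite /sgnb /= ?mulr1 ?mul1r ?mulrN1 ?mulN1r ?opprK.
Qed.

Lemma sgnb_norm (R : rcfType) a : `|sgnb a : R| = 1.
Proof. by case: a; rewrite /sgnb ?normrN normr1. Qed.

Lemma row_val (R : rcfType) n (s : {ffun 'I_n -> bool}) (i : 'I_n) :
  (1 <= n)%N ->
  `|(tree_matrix R n *m signvec s) i 0| =
  `|1 + Ssum R (nth [::] (tree_strings n) i) (fun l => xb s 0 == xb s l.+1)|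
     / Num.sqrt (size (nth [::] (tree_strings n) i)).+1%:R.
Proof.
move=> Hn.
have Ht : nth [::] (tree_strings n) i \in tree_strings n by rewrite mem_nth // tree_size.
have HL := tree_size_le Hn Ht.
move: Ht HL; set t := nth [::] (tree_strings n) i => Ht HL.
set c := Num.sqrt _.
have cpos : 0 < c by rewrite sqrtr_gt0 ltr0n.
rewrite !mxE.
under eq_bigr => j _ do rewrite !mxE -xbE.
pose G j := nth 0 (@tree_row R t) j * sgnb (xb s j).
rewrite (eq_bigr (fun j : 'I_n => G j)) //.
rewrite -(big_mkord xpredT G) (big_cat_nat _ (n := (size t).+1)) //=.
rewrite [X in _ + X]big1_seq ?addr0; last first.
  move=> j /andP[_]; rewrite mem_index_iota => /andP[Hj _].
  by rewrite /G nth_default ?mul0r // size_map /= size_map.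
rewrite big_mkord big_ord_recl /G /tree_row /=.
rewrite -/c.
under eq_bigr => j _ do rewrite add0n (nth_map 0) ?size_map // (nth_map false) //.
rewrite /= /Ssum.
have -> : 1 / c * sgnb (xb s 0) + \sum_(i0 < size t) sgnb (nth false t i0) / c * sgnb (xb s (bump 0 i0))
   = sgnb (xb s 0) * (1 + \sum_(l < size t) sgnb (nth false t l == (xb s 0 == xb s l.+1))) / c.
  rewrite mulrDr mulr1 mulrDl mulr_sumr mulr_suml mul1r mulrC; congr (_ + _).
  apply: eq_bigr => l _; rewrite /bump /= add1n.
  by rewrite -sgnb_mul mulrAC.
by rewrite normf_div normrM sgnb_norm mul1r (ger0_norm (ltW cpos)).
Qed.

Definition matchb (t : seq bool) (f : nat -> bool) :=
  all (fun l => nth false t l == f l) (iota 0 (size t)).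

Lemma matchb_cons b t f : matchb (b :: t) f = (b == f 0%N) && matchb t (fun l => f l.+1).
Proof.
rewrite /matchb /= -add1n iotaDl all_map; congr (_ && _).
Qed.

Lemma Ssum_cons (R : rcfType) b t f :
  Ssum R (b :: t) f = sgnb (b == f 0%N) + Ssum R t (fun l => f l.+1).
Proof. by rewrite /Ssum /= big_ord_recl. Qed.

Lemma S_bounds (R : rcfType) t f : - (size t)%:R <= Ssum R t f <= (size t)%:R.
Proof.
elim: t f => [|b t IH] f; first by rewrite /Ssum big_ord0 oppr0 lexx.
rewrite Ssum_cons /= -addn1 natrD; have /andP[h1 h2] := IH (fun l => f l.+1).
by case: (b == f 0%N); rewrite /sgnb; apply/andP; split; lra.
Qed.

Lemma S_match (R : rcfType) t f : matchb t f -> Ssum R t f = (size t)%:R.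
Proof.
elim: t f => [|b t IH] f; first by rewrite /Ssum big_ord0.
rewrite matchb_cons Ssum_cons => /andP[/eqP-> H]; rewrite eqxx IH //= -addn1 natrD /sgnb.
by rewrite addrC.
Qed.

Lemma S_nomatch (R : rcfType) t f : ~~ matchb t f -> Ssum R t f <= (size t)%:R - 2.
Proof.
elim: t f => [|b t IH] f; first by [].
rewrite matchb_cons Ssum_cons negb_and /= -addn1 natrD.
have /andP[h1 h2] := S_bounds R t (fun l => f l.+1).
case: eqP => _ /= H; rewrite /sgnb.
  have := IH _ H; lra.
lra.
Qed.

Lemma bigmax_eq (R : rcfType) m (F : 'I_m -> R) M : 0 <= M -> (forall i, F i <= M) ->
  (exists i, F i = M) -> \big[Num.max/0]_(i < m) F i = M.
Proof.
move=> H0 Hle [i0 Hi0]; apply/le_anti/andP; split.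
  by elim/big_ind: _ => // x y hx hy; rewrite ge_max hx hy.
by rewrite (bigD1 i0) //= le_max Hi0 lexx.
Qed.

Lemma div_sqrt (R : rcfType) (x : R) : 0 < x -> x / Num.sqrt x = Num.sqrt x.
Proof.
move=> hx; have hs : 0 < Num.sqrt x by rewrite sqrtr_gt0.
by rewrite -{1}(sqr_sqrtr (ltW hx)) expr2 -mulrA divff ?mulr1 // gt_eqF.
Qed.

Lemma val_le (R : rcfType) (a : R) (L k : nat) : 0 <= a -> a <= L%:R - 1 -> (L <= k.+1)%N ->
  a / Num.sqrt (L.+1)%:R <= Num.sqrt (k.+1)%:R.
Proof.
move=> ha hL hk.
have hs : 0 < Num.sqrt (L.+1)%:R :> R by rewrite sqrtr_gt0 ltr0n.
rewrite ler_pdivrMr // -sqrtrM ?ler0n // -(ger0_norm ha) -sqrtr_sqr ler_sqrt; last first.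
  by rewrite mulr_ge0 ?ler0n.
have hk' : (L%:R <= k%:R + 1 :> R) by rewrite natr1 ler_nat.
rewrite -!natr1; nra.
Qed.

Lemma match_val (R : rcfType) t f : matchb t f ->
  `|1 + Ssum R t f| / Num.sqrt (size t).+1%:R = Num.sqrt (size t).+1%:R.
Proof.
move=> H; rewrite S_match // -natr1 addrC natr1 normr_nat div_sqrt // ltr0n //.
Qed.

Lemma nomatch_val (R : rcfType) t f k : ~~ matchb t f -> (size t <= k.+1)%N ->
  `|1 + Ssum R t f| / Num.sqrt (size t).+1%:R <= Num.sqrt (k.+1)%:R.
Proof.
move=> H hk; apply: val_le => //.
have := S_nomatch R H; have /andP[h1 h2] := S_bounds R t f.
move=> h3; rewrite ler_norml; apply/andP; split; lra.
Qed.

Lemma matchb_map (t : seq bool) f : matchb [seq f l | l <- iota 0 (size t)] f.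
Proof.
rewrite /matchb size_map size_iota; apply/allP => l; rewrite mem_iota /= => hl.
by rewrite (nth_map 0%N) ?size_iota // nth_iota.
Qed.

Lemma matchb_mapn m f : matchb [seq f l | l <- iota 0 m] f.
Proof.
have := matchb_map (nseq m false) f; by rewrite size_nseq.
Qed.

Lemma map_rcons_iota m (f : nat -> bool) :
  rcons [seq f l | l <- iota 0 m] (f m) = [seq f l | l <- iota 0 m.+1].
Proof. by rewrite -addn1 iotaD map_cat cats1. Qed.

Lemma matchb_rcons t b f : matchb (rcons t b) f -> t = [seq f l | l <- iota 0 (size t)].
Proof.
move/allP => H; apply: (@eq_from_nth _ false); first by rewrite size_map size_iota.
move=> l hl; rewrite (nth_map 0%N) ?size_iota // nth_iota // add0n.
have := H l; rewrite size_rcons mem_iota /= ltnS (ltnW hl) nth_rcons hl => /(_ isT) /eqP.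
done.
Qed.

Definition fs n (s : {ffun 'I_n -> bool}) := fun l => xb s 0 == xb s l.+1.
Definition ws n (s : {ffun 'I_n -> bool}) := [seq fs s l | l <- iota 0 (trunc_log 2 n)].
Definition Ps n (s : {ffun 'I_n -> bool}) : bool :=
  ws s \in take (n - 2 ^ trunc_log 2 n) (lex_strings (trunc_log 2 n)).

Lemma infnorm_val (R : rcfType) n (s : {ffun 'I_n -> bool}) : (1 <= n)%N ->
  infnorm (tree_matrix R n *m signvec s) =
  if Ps s then Num.sqrt (trunc_log 2 n).+2%:R else Num.sqrt (trunc_log 2 n).+1%:R.
Proof.
move=> Hn; rewrite /infnorm.
set k := trunc_log 2 n; set r := (n - 2 ^ k)%N.
have Hsq : Num.sqrt k.+1%:R <= Num.sqrt k.+2%:R :> R by rewrite ler_sqrt ?ler0n // ler_nat.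
have Hup : forall u, u \in tree_strings n ->
    `|1 + Ssum R u (fs s)| / Num.sqrt (size u).+1%:R <=
    if Ps s then Num.sqrt k.+2%:R else Num.sqrt k.+1%:R.
  move=> u Hu; case: (tree_inv Hu) => [Hd|[t [b [-> Ht]]]].
    have Hs : size u = k by apply: lex_all (mem_drop Hd).
    case: (boolP (matchb u (fs s))) => Hm.
      rewrite match_val // Hs; case: ifP => // _.
    apply: le_trans (@nomatch_val R _ _ k Hm _) _; first by rewrite Hs.
    by case: ifP => _; [exact: Hsq | exact: lexx].
  have Hs : size t = k by apply: lex_all (mem_take Ht).
  case: (boolP (matchb (rcons t b) (fs s))) => Hm.
    have Hp : Ps s.
      rewrite /Ps /ws -/k -/r.
      have -> : [seq fs s l | l <- iota 0 k] = t by rewrite -Hs -(matchb_rcons Hm).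
      exact: Ht.
    by rewrite match_val // Hp size_rcons Hs.
  apply: le_trans (@nomatch_val R _ _ k Hm _) _; first by rewrite size_rcons Hs.
  by case: ifP => _; [exact: Hsq | exact: lexx].
apply: bigmax_eq.
- by case: ifP => _; rewrite sqrtr_ge0.
- move=> i; rewrite row_val //; apply: Hup; by rewrite mem_nth // tree_size.
have Hex : forall u, u \in tree_strings n -> exists i : 'I_n, nth [::] (tree_strings n) i = u.
  move=> u Hu; have hi : (index u (tree_strings n) < n)%N by rewrite -{2}(tree_size Hn) index_mem.
  by exists (Ordinal hi); rewrite nth_index.
case: ifP => HP.
  have Hu : rcons (ws s) (fs s k) \in tree_strings n by apply: tree_mem_long.
  have [i Hi] := Hex _ Hu; exists i; rewrite row_val // Hi.
  rewrite /ws map_rcons_iota.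
  by rewrite match_val ?matchb_mapn // size_map size_iota.
have Hu : ws s \in tree_strings n.
  apply: tree_mem_short.
  have : ws s \in lex_strings k by apply: lex_mem; rewrite size_map size_iota.
  rewrite -{1}(cat_take_drop r (lex_strings k)) mem_cat.
  by move: HP; rewrite /Ps -/k -/r => ->.
have [i Hi] := Hex _ Hu; exists i; rewrite row_val // Hi.
by rewrite /ws match_val ?matchb_mapn // size_map size_iota.
Qed.

Local Open Scope nat_scope.

Lemma prod_cnt n k : k < n ->
  \prod_(j < n) (if 0 < j <= k then 1 else 2) = 2 ^ (n - k).
Proof.
case: n => [//|n] hk; rewrite big_ord_recl /=.
rewrite (eq_bigr (fun j : 'I_n => if j < k then 1 else 2)); last first.
  by move=> j _; rewrite /bump /= add1n.
have -> : \prod_(j < n) (if j < k then 1 else 2) = \prod_(0 <= j < n) (if j < k then 1 else 2) by rewrite big_mkord.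
rewrite (big_cat_nat _ (n := k)) //.
rewrite big1_seq /=; last by move=> j /=; rewrite mem_index_iota => /andP[_ ->].
rewrite (eq_big_nat _ _ (F2 := fun=> 2)); last by move=> j /andP[hj _]; rewrite ltnNge hj.
by rewrite prod_nat_const_nat mul1n -expnS subSn.
Qed.

Lemma cnt_fam n k (t : seq bool) : k < n -> size t = k ->
  #|[pred s : {ffun 'I_n -> bool} | [seq xb s l.+1 | l <- iota 0 k] == t]| = 2 ^ (n - k).
Proof.
move=> hk hs.
pose F := fun j : 'I_n => [pred b : bool | (0 < j <= k) ==> (b == nth false t j.-1)].
rewrite -(prod_cnt hk).
have -> : \prod_(j < n) (if 0 < j <= k then 1 else 2) = #|family F|.
  rewrite card_family foldrE big_map big_enum /=; apply: eq_bigr => j _.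
  by rewrite /F; case: (0 < j <= k); case: (nth false t j.-1); rewrite cardE /enum_mem /= unlock.
apply: eq_card => s; rewrite inE; apply/eqP/familyP.
  move=> Ht j; rewrite /F inE -Ht; apply/implyP => /andP[h1 h2].
  rewrite (nth_map 0) ?size_iota; last lia.
  by rewrite nth_iota; [rewrite add0n prednK // xbE | lia].
move=> H; apply: (@eq_from_nth _ false); first by rewrite size_map size_iota hs.
move=> l; rewrite size_map size_iota => hl.
rewrite (nth_map 0) ?size_iota // nth_iota // add0n.
have hl1 : l.+1 < n by lia.
have := H (Ordinal hl1); rewrite /F inE /= hl => /eqP <-.
by rewrite -(xbE s (Ordinal hl1)).
Qed.

Lemma k_lt n : 0 < n -> trunc_log 2 n < n.
Proof.
move=> Hn; have := tk_bounds Hn; have := ltn_expl (trunc_log 2 n) (isT : 1 < 2); lia.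
Qed.

Lemma cnt_ws n (t : seq bool) (Hn : 0 < n) : size t = trunc_log 2 n ->
  \sum_(s : {ffun 'I_n -> bool}) (ws s == t) = 2 ^ (n - trunc_log 2 n).
Proof.
move=> hs; have hk := k_lt Hn; move: hs hk; set k := trunc_log 2 n => hs hk.
pose i0 := Ordinal Hn.
pose T := fun s : {ffun 'I_n -> bool} =>
  [ffun j : 'I_n => if 0 < j <= k then (s i0 == s j) else s j].
have TI : involutive T.
  move=> s; apply/ffunP => j; rewrite !ffunE /=.
  by case: (0 < j <= k) => //; case: (s i0); case: (s j).
have Tw : forall s, ws (T s) = [seq xb s l.+1 | l <- iota 0 k].
  move=> s; rewrite /ws -/k; apply/eq_in_map => l; rewrite mem_iota /= => hl.
  have hl1 : l.+1 < n by lia.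
  rewrite /fs (xbE (T s) i0) (xbE (T s) (Ordinal hl1)) (xbE s (Ordinal hl1)).
  rewrite !ffunE /= hl.
  by case: (s i0); case: (s (Ordinal hl1)).
rewrite (reindex_inj (inv_inj TI)) /=.
under eq_bigr => s _ do rewrite Tw.
rewrite -(cnt_fam hk hs) -sum1_card.
rewrite [RHS]big_mkcond /=; apply: eq_bigr => s _; rewrite inE; by case: (_ == t).
Qed.

Lemma cnt_Ps n (Hn : 0 < n) :
  \sum_(s : {ffun 'I_n -> bool}) (Ps s : nat) =
    (n - 2 ^ trunc_log 2 n) * 2 ^ (n - trunc_log 2 n).
Proof.
set k := trunc_log 2 n; set r := n - 2 ^ k; set S := take r (lex_strings k).
have US : uniq S by rewrite take_uniq // lex_uniq.
have -> : \sum_(s : {ffun 'I_n -> bool}) (Ps s : nat) =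
    \sum_(s : {ffun 'I_n -> bool}) \sum_(t <- S) (t == ws s).
  apply: eq_bigr => s _; rewrite /Ps -/k -/r -/S -(count_uniq_mem _ US) -sum1_count.
  by rewrite big_mkcond.
rewrite exchange_big /=.
rewrite (eq_big_seq (fun _ => 2 ^ (n - k))); last first.
  move=> t Ht; rewrite -(cnt_ws Hn (lex_all (mem_take Ht))).
  by apply: eq_bigr => s _; rewrite eq_sym.
rewrite big_const_seq count_predT iter_addn_0 size_takel ?lex_size ?r_le //.
by rewrite mulnC.
Qed.

Local Open Scope ring_scope.
From mathcomp Require Import ring.

Theorem theorem3 (R : rcfType) (n : nat) :
  (1 <= n)%N ->
  let k := trunc_log 2 n in
  beta (tree_matrix R n) =
    (2 * Num.sqrt (k.+1)%:R - Num.sqrt (k.+2)%:R)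
    + n%:R / 2 ^+ k * (Num.sqrt (k.+2)%:R - Num.sqrt (k.+1)%:R)
  /\ ((n = 2 ^ k)%N -> beta (tree_matrix R n) = Num.sqrt (k.+1)%:R).
Proof.
move=> Hn k.
set a := Num.sqrt (k.+2)%:R; set b := Num.sqrt (k.+1)%:R.
have Hb : beta (tree_matrix R n) =
    (2 * b - a) + n%:R / 2 ^+ k * (a - b).
  rewrite /beta.
  under eq_bigr => s _ do rewrite (infnorm_val R s Hn) -/k -/a -/b.
  have -> : \sum_(s : {ffun 'I_n -> bool}) (if Ps s then a else b) =
      \sum_(s : {ffun 'I_n -> bool}) (b + (Ps s : nat)%:R * (a - b)).
    by apply: eq_bigr => s _; case: (Ps s); rewrite /= ?mul1r ?mul0r ?addr0 // addrC subrK.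
  rewrite big_split /= sumr_const card_ffun card_bool card_ord -mulr_suml -natr_sum cnt_Ps //.
  have hk : (2 ^ k <= n)%N by have := tk_bounds Hn; case/andP.
  have hkn : (k <= n)%N by have := k_lt Hn; rewrite -/k; lia.
  rewrite natrM natrB // !natrX.
  have -> : (2 ^+ n : R) = 2 ^+ k * 2 ^+ (n - k) by rewrite -exprD subnKC.
  rewrite -/k -[b *+ _]mulr_natr natrX.
  have -> : (2 ^+ n : R) = 2 ^+ k * 2 ^+ (n - k) by rewrite -exprD subnKC.
  have h1 : (2 ^+ k : R) != 0 by rewrite expf_neq0 // pnatr_eq0.
  have h2 : (2 ^+ (n - k) : R) != 0 by rewrite expf_neq0 // pnatr_eq0.
  field; by rewrite h1 h2.
split => // Hn2; rewrite Hb.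
have -> : n%:R / 2 ^+ k = 1 :> R.
  have h1 : (2 ^+ k : R) != 0 by rewrite expf_neq0 // pnatr_eq0.
  by rewrite {1}Hn2 natrX divff.
ring.
Qed.
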